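(* Let $k\ge 0$ and let $P_{4k+3}$ be the path with vertices labeled $1,2,\dots,4k+3$ consecutively. Then $\tau(P_{4k+3})=k+2$, and for each vertex $v$, writing $v=4q+r$ with $0\le r<4$, $$TDV(v)=\begin{cases}0 & \text{if } v\equiv 0 \pmod 4,\\ q+1 & \text{if } v\equiv 1 \pmod 4,\\ k+2 & \text{if } v\equiv 2 \pmod 4,\\ k+1-q & \text{if } v\equiv 3 \pmod 4.\end{cases}$$
   Context: A set $D \subseteq V(G)$ is a total dominating set of a graph $G$ if every vertex of $G$ has a neighbor in $D$. $\gamma_t(G)$ is the minimum cardinality of a total dominating set; a minimum one is a $\gamma_t(G)$-set. $\tau(G)$ is the number of $\gamma_t(G)$-sets and $TDV(v)$ is the number of $\gamma_t(P_{4k+3})$-sets containing $v$. *)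

(* Defs.v *)
From mathcomp Require Import all_boot.
Set Implicit Arguments. Unset Strict Implicit. Unset Printing Implicit Defensive.

(* The path P_n on vertex type 'I_n; ordinal i represents vertex label i+1.
   Two vertices are adjacent iff their labels differ by exactly 1. *)
Definition path_adj (n : nat) : rel 'I_n :=
  fun i j => (i.+1 == j :> nat) || (j.+1 == i :> nat).
Arguments path_adj n : clear implicits.

Section TD.
Variable (T : finType) (adj : rel T).

Definition total_dominating (D : {set T}) : bool :=
  [forall v, [exists u in D, adj v u]].

Definition min_tds (D : {set T}) : bool :=
  total_dominating D && [forall E : {set T}, total_dominating E ==> (#|D| <= #|E|)].

Definition tau : nat := #|[set D : {set T} | min_tds D]|.

Definition TDV (v : T) : nat := #|[set D : {set T} | min_tds D && (v \in D)]|.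
End TD.

(* Main.v *)
Require Import Defs.
From mathcomp Require Import all_boot zify.
Set Implicit Arguments. Unset Strict Implicit.

Definition ff (t i : nat) : bool :=
  (i %% 4 == 1) || ((i %% 4 == 2) && (i %/ 4 < t)) || ((i %% 4 == 0) && (t <= i %/ 4)).

Lemma ff0 t j : ff t (4*j) = (t <= j).
Proof. rewrite /ff; have -> : (4*j)%%4 = 0 by lia. have -> : (4*j)%/4 = j by lia. by []. Qed.
Lemma ff1 t j : ff t (4*j+1) = true.
Proof. rewrite /ff; have -> : (4*j+1)%%4 = 1 by lia. by []. Qed.
Lemma ff2 t j : ff t (4*j+2) = (j < t).
Proof. rewrite /ff; have -> : (4*j+2)%%4 = 2 by lia. have -> : (4*j+2)%/4 = j by lia. by rewrite /= orbF. Qed.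
Lemma ff3 t j : ff t (4*j+3) = false.
Proof. rewrite /ff; have -> : (4*j+3)%%4 = 3 by lia. by []. Qed.

Lemma block_sum (g : nat -> nat) k : \sum_(0 <= i < 4*k+3) g i =
  \sum_(j < k) (g (4*j) + g (4*j+1) + g (4*j+2) + g (4*j+3)) + (g (4*k) + g (4*k+1) + g (4*k+2)).
Proof.
elim: k => [|k IH].
  by rewrite big_ord0 big_mkord !big_ord_recr big_ord0 /= muln0.
have -> : 4*k.+1+3 = (4*k+3).+4 by lia.
rewrite !big_nat_recr //= IH big_ord_recr /=.
have e3 : (4*k+3).+3 = 4*k.+1+2 by lia.
have e2 : (4*k+3).+2 = 4*k.+1+1 by lia.
have e1 : (4*k+3).+1 = 4*k.+1 by lia.
rewrite e3 e2 e1. lia.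
Qed.

Section Core.
Variables (k : nat) (d : nat -> bool).
Hypothesis H : forall i, i < 4*k+3 -> (0 < i) && d i.-1 || d i.+1.
Hypothesis Hout : forall i, 4*k+3 <= i -> d i = false.

Lemma blocks j : j < k -> (d (4*j) || d (4*j+2)) && (d (4*j+1) || d (4*j+3)).
Proof.
move=> hj. have h1 := @H (4*j+1) ltac:(lia). have h2 := @H (4*j+2) ltac:(lia).
have e1 : (4*j+1).-1 = 4*j by lia. have e2 : (4*j+1).+1 = 4*j+2 by lia.
have e3 : (4*j+2).-1 = 4*j+1 by lia. have e4 : (4*j+2).+1 = 4*j+3 by lia.
rewrite e1 e2 in h1; rewrite e3 e4 in h2.
move: h1 h2; case: (d (4*j)); case: (d (4*j+1)); case: (d (4*j+2)); case: (d (4*j+3)); by rewrite ?andbF.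
Qed.

Lemma lastb : d (4*k+1) && (d (4*k) || d (4*k+2)).
Proof.
have h1 := @H (4*k+1) ltac:(lia). have h2 := @H (4*k+2) ltac:(lia).
have h3 := @Hout (4*k+3) (leqnn _).
have e1 : (4*k+1).-1 = 4*k by lia. have e2 : (4*k+1).+1 = 4*k+2 by lia.
have e3 : (4*k+2).-1 = 4*k+1 by lia. have e4 : (4*k+2).+1 = 4*k+3 by lia.
rewrite e1 e2 in h1; rewrite e3 e4 h3 in h2.
move: h1 h2; case: (d (4*k)); case: (d (4*k+1)); case: (d (4*k+2)); by rewrite ?andbF.
Qed.

Definition bs j : nat := d (4*j) + d (4*j+1) + d (4*j+2) + d (4*j+3).
Definition ls : nat := d (4*k) + d (4*k+1) + d (4*k+2).

Lemma sum_blocks : \sum_(0 <= i < 4*k+3) d i = \sum_(j < k) bs j + ls.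
Proof. exact: (block_sum (fun i => nat_of_bool (d i)) k). Qed.

Lemma bs_ge2 j : j < k -> 2 <= bs j.
Proof.
move=> /blocks; rewrite /bs.
case: (d (4*j)); case: (d (4*j+1)); case: (d (4*j+2)); case: (d (4*j+3)); by [].
Qed.

Lemma ls_ge2 : 2 <= ls.
Proof.
move: lastb; rewrite /ls.
case: (d (4*k)); case: (d (4*k+1)); case: (d (4*k+2)); by [].
Qed.

Lemma core_lower : 2*k+2 <= \sum_(0 <= i < 4*k+3) d i.
Proof.
rewrite sum_blocks.
have Hs : \sum_(j < k) 2 <= \sum_(j < k) bs j.
  by apply: leq_sum => j _; apply: bs_ge2.
rewrite sum_nat_const card_ord in Hs. have := ls_ge2. lia.
Qed.

Hypothesis Hle : \sum_(0 <= i < 4*k+3) d i <= 2*k+2.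

Lemma eqcase : (forall j, j < k -> bs j = 2) /\ ls = 2.
Proof.
have Hsplit : \sum_(j < k) bs j = \sum_(j < k) 2 + \sum_(j < k) (bs j - 2).
  rewrite -big_split; apply: eq_bigr => j _; apply/esym; exact: subnKC (bs_ge2 (ltn_ord j)).
move: Hle; rewrite sum_blocks Hsplit sum_nat_const card_ord => Hl.
have := ls_ge2 => hl.
split; last by lia.
move=> j hj.
have : \sum_(j < k) (bs j - 2) = 0 by lia.
rewrite (bigD1 (Ordinal hj)) //= => e. have := bs_ge2 hj. lia.
Qed.

Definition c j := d (4*j+2).

Lemma c0 j : j <= k -> d (4*j) = ~~ c j.
Proof.
rewrite /c leq_eqVlt => /orP[/eqP->|hj].
  move: lastb (proj2 eqcase); rewrite /ls.
  case: (d (4*k)); case: (d (4*k+1)); case: (d (4*k+2)); by [].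
move: (blocks hj) ((proj1 eqcase) j hj); rewrite /bs.
case: (d (4*j)); case: (d (4*j+1)); case: (d (4*j+2)); case: (d (4*j+3)); by [].
Qed.

Lemma d3 j : j < k -> d (4*j+3) = ~~ d (4*j+1).
Proof.
move=> hj.
move: (blocks hj) ((proj1 eqcase) j hj); rewrite /bs.
case: (d (4*j)); case: (d (4*j+1)); case: (d (4*j+2)); case: (d (4*j+3)); by [].
Qed.

Lemma one j : j <= k -> d (4*j+1).
Proof.
elim: j => [_|j IH hj].
  by have := @H 0 ltac:(lia).
have h := @H (4*j+4) ltac:(lia).
have e1 : (4*j+4).-1 = 4*j+3 by lia. have e2 : (4*j+4).+1 = 4*j.+1+1 by lia.
rewrite e1 e2 d3 ?IH in h; [|lia|lia].
by move: h; rewrite andbF.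
Qed.

Lemma mono j : j < k -> c j.+1 -> c j.
Proof.
move=> hj.
have h := @H (4*j+3) ltac:(lia).
have e1 : (4*j+3).-1 = 4*j+2 by lia. have e2 : (4*j+3).+1 = 4*j.+1 by lia.
rewrite e1 e2 c0 in h; last by lia.
by move: h; rewrite /c; case: (d (4*j+2)) => //; rewrite andbF /= => /negbTE ->.
Qed.

Lemma core_char : exists2 t, t <= k+1 & forall i, i < 4*k+3 -> d i = ff t i.
Proof.
have ex : exists j, (k < j) || ~~ c j by exists k.+1; rewrite ltnSn.
case: (ex_minnP ex) => t Pt tmin.
have tle : t <= k+1.
  have := tmin k.+1; rewrite ltnSn => /(_ isT). lia.
have Hc : forall j, j <= k -> c j = (j < t).
  move=> j hj. case: (ltnP j t) => hjt.
    apply/negPn/negP => nc. have := tmin j; rewrite nc orbT => /(_ isT). lia.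
  have Ptk : t <= k /\ ~~ c t.
    move: Pt; case/orP => [|->]; [lia|split=>//; lia].
  have gen : forall p, t + p <= k -> ~~ c (t + p).
    elim => [|p IHp hp]; first by rewrite addn0 => _; exact: Ptk.2.
    apply/negP; rewrite addnS => cp. have := IHp ltac:(lia). rewrite (mono _ cp) //; lia.
  have := gen (j - t) ltac:(lia). have -> : t + (j - t) = j by lia.
  by move/negbTE.
exists t => // i hi.
have Hr : i %% 4 < 4 by rewrite ltn_pmod.
have Hj : i %/ 4 <= k by lia.
have Hj3 : i %% 4 = 3 -> i %/ 4 < k by lia.
have Hi : i = 4 * (i %/ 4) + i %% 4 by lia.
rewrite /ff {1}Hi.
move: (i %/ 4) (i %% 4) Hj Hr Hj3 => j r Hj Hr Hj3.
case: r Hr Hj3 => [|[|[|[|r]]]] // _ Hj3 /=.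
- by rewrite addn0 c0 // Hc // -leqNgt.
- by rewrite one.
- by rewrite orbF -Hc.
- have hj := Hj3 erefl. by rewrite d3 // one //.
Qed.
End Core.

Definition dd n (D : {set 'I_n}) (i : nat) : bool := [exists u in D, val u == i].
Definition Dt n t : {set 'I_n} := [set o : 'I_n | ff t o].

Lemma dd_val n (D : {set 'I_n}) (o : 'I_n) : dd D o = (o \in D).
Proof.
apply/existsP/idP => [[u /andP[uD /eqP/val_inj <-]] //|oD].
by exists o; rewrite oD eqxx.
Qed.

Lemma dd_out n (D : {set 'I_n}) i : n <= i -> dd D i = false.
Proof.
move=> hi; apply/existsP => [[u /andP[_ /eqP e]]].
have := ltn_ord u; rewrite e; lia.
Qed.

Lemma dd_Dt n t i : dd (Dt n t) i = (i < n) && ff t i.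
Proof.
case: (ltnP i n) => hi /=; last by rewrite dd_out.
by rewrite (dd_val _ (Ordinal hi)) inE.
Qed.

Lemma card_dd n (D : {set 'I_n}) : #|D| = \sum_(0 <= i < n) dd D i.
Proof.
rewrite -sum1_card big_mkcond big_mkord /=.
by apply: eq_bigr => o _; rewrite dd_val; case: (o \in D).
Qed.

Lemma tds_to n (D : {set 'I_n}) : total_dominating (path_adj n) D ->
  forall i, i < n -> (0 < i) && dd D i.-1 || dd D i.+1.
Proof.
move=> /forallP H i hi.
have /existsP [u /andP [uD adj]] := H (Ordinal hi).
rewrite /path_adj /= in adj.
case/orP: adj => /eqP e.
  apply/orP; right; apply/existsP; exists u; rewrite uD; apply/eqP; by rewrite e.
apply/orP; left; rewrite -e /=; apply/existsP; exists u; by rewrite uD eqxx.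
Qed.

Lemma tds_from n (D : {set 'I_n}) :
  (forall i, i < n -> (0 < i) && dd D i.-1 || dd D i.+1) -> total_dominating (path_adj n) D.
Proof.
move=> H; apply/forallP => o.
case/orP: (H o (ltn_ord o)) => [/andP[hp /existsP[u /andP[uD /eqP e]]]|/existsP[u /andP[uD /eqP e]]];
  apply/existsP; exists u; rewrite uD /path_adj /= e.
  by rewrite prednK // eqxx orbT.
by rewrite eqxx.
Qed.

Lemma tds_lower k (E : {set 'I_(4*k+3)}) : total_dominating (path_adj _) E -> 2*k+2 <= #|E|.
Proof.
move=> HE; rewrite card_dd; apply: core_lower; first exact: tds_to.
by move=> i hi; apply: dd_out.
Qed.

Lemma card_Dt k t : #|Dt (4*k+3) t| = 2*k+2.
Proof.
rewrite card_dd (block_sum (fun i => nat_of_bool (dd (Dt (4*k+3) t) i))).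
rewrite !dd_Dt.
have -> : \sum_(j < k) (dd (Dt (4 * k + 3) t) (4 * j) + dd (Dt (4 * k + 3) t) (4 * j + 1) +
    dd (Dt (4 * k + 3) t) (4 * j + 2) + dd (Dt (4 * k + 3) t) (4 * j + 3)) = \sum_(j < k) 2.
  apply: eq_bigr => j _. rewrite !dd_Dt ff0 ff1 ff2 ff3.
  have hj := ltn_ord j.
  have -> : 4 * j < 4*k+3 by lia. have -> : 4 * j+1 < 4*k+3 by lia.
  have -> : 4 * j+2 < 4*k+3 by lia.
  by rewrite /= andbF addn0 addnAC -addnA; case: ltnP.
rewrite sum_nat_const card_ord ff0 ff1 ff2.
have -> : 4 * k < 4*k+3 by lia. have -> : 4 * k+1 < 4*k+3 by lia.
have -> : 4 * k+2 < 4*k+3 by lia.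
rewrite /=. case: ltnP => /= _; lia.
Qed.

Lemma Dt_tds k t : t <= k+1 -> total_dominating (path_adj (4*k+3)) (Dt _ t).
Proof.
move=> ht; apply: tds_from => i hi.
rewrite !dd_Dt.
have Hr : i %% 4 < 4 by rewrite ltn_pmod.
have Hi : i = 4 * (i %/ 4) + i %% 4 by lia.
move: hi; rewrite Hi.
move: (i %/ 4) (i %% 4) Hr => j r Hr.
clear Hi. case: r Hr => [|[|[|[|r]]]] // _ hi.
- rewrite !addn0 in hi *. have -> : (4*j).+1 = 4*j+1 by lia.
  apply/orP; right; apply/andP; split; [lia | by rewrite ff1].
- case: (ltnP j t) => hjt.
    have -> : (4*j+1).+1 = 4*j+2 by lia.
    apply/orP; right; apply/andP; split; [lia | by rewrite ff2].
  have -> : (4*j+1).-1 = 4*j by lia.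
  apply/orP; left; apply/and3P; split; [lia | lia | by rewrite ff0].
- have -> : (4*j+2).-1 = 4*j+1 by lia.
  apply/orP; left; apply/and3P; split; [lia | lia | by rewrite ff1].
- case: (ltnP j t) => hjt.
    have -> : (4*j+3).-1 = 4*j+2 by lia.
    apply/orP; left; apply/and3P; split; [lia | lia | by rewrite ff2].
  have -> : (4*j+3).+1 = 4*j.+1 by lia.
  apply/orP; right; apply/andP; split; [lia | rewrite ff0; lia].
Qed.

Lemma min_Dt k t : t <= k+1 -> min_tds (path_adj (4*k+3)) (Dt _ t).
Proof.
move=> ht; rewrite /min_tds Dt_tds //=.
apply/forallP => E; apply/implyP => HE.
by rewrite card_Dt tds_lower.
Qed.

Lemma min_is_Dt k (D : {set 'I_(4*k+3)}) : min_tds (path_adj _) D -> exists2 t, t <= k+1 & D = Dt _ t.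
Proof.
case/andP => HD /forallP Hm.
have := implyP (Hm (Dt _ 0)) (@Dt_tds k 0 isT); rewrite card_Dt card_dd => Hle.
have [t ht Ht] := core_char (tds_to HD) (fun i hi => dd_out D hi) Hle.
exists t => //; apply/setP => o; rewrite inE -dd_val; exact: Ht.
Qed.

Lemma Dt_inj k (t1 t2 : 'I_(k+2)) : Dt (4*k+3) t1 = Dt (4*k+3) t2 -> t1 = t2.
Proof.
move=> E; apply: val_inj => /=.
have key : forall a b : nat, a < b -> b < k+2 -> Dt (4*k+3) a <> Dt (4*k+3) b.
  move=> a b hab hb E'.
  have ha : 4*a+2 < 4*k+3 by lia.
  have := congr1 (fun D : {set 'I_(4*k+3)} => Ordinal ha \in D) E'; rewrite /= !inE /= !ff2 hab ltnn //.
case: (ltngtP t1 t2) => // h.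
  by case: (key _ _ h (ltn_ord t2)).
by case: (key _ _ h (ltn_ord t1)).
Qed.

Lemma card_pred m (P : pred nat) : #|[set t : 'I_m | P t]| = \sum_(0 <= t < m) P t.
Proof.
rewrite -sum1_card big_mkcond big_mkord /=.
by apply: eq_bigr => t _; rewrite inE; case: (P t).
Qed.

Lemma cnt_le m q : q < m -> \sum_(0 <= t < m) (t <= q) = q + 1.
Proof.
move=> hq; rewrite (big_cat_nat _ (n:=q+1)) //=; last by lia.
rewrite (eq_big_nat _ _ (F2 := fun _ => 1)); last by move=> i /andP[_ h]; rewrite (_ : i <= q) //; lia.
rewrite [X in _ + X](eq_big_nat _ _ (F2 := fun _ => 0)); last by move=> i /andP[h _]; rewrite leqNgt (_ : q < i) //; lia.
rewrite !sum_nat_const_nat; lia.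
Qed.

Lemma cnt_gt m q : q < m -> \sum_(0 <= t < m) (q < t) = m - (q + 1).
Proof.
move=> hq; rewrite (big_cat_nat _ (n:=q+1)) //=; last by lia.
rewrite (eq_big_nat _ _ (F2 := fun _ => 0)); last by move=> i /andP[_ h]; rewrite ltnNge (_ : i <= q) //; lia.
rewrite [X in _ + X](eq_big_nat _ _ (F2 := fun _ => 1)); last by move=> i /andP[h _]; rewrite (_ : q < i) //; lia.
rewrite !sum_nat_const_nat; lia.
Qed.

Theorem proposition5p5 (k : nat) :
  tau (path_adj (4 * k + 3)) = k + 2 /\
  forall v : 'I_(4 * k + 3),
    let lab := (v : nat).+1 in
    let q := lab %/ 4 in
    TDV (path_adj (4 * k + 3)) v =
      match lab %% 4 with
      | 0 => 0
      | 1 => q + 1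
      | 2 => k + 2
      | _ => k + 1 - q
      end.
Proof.
have Hset : forall P : pred {set 'I_(4*k+3)},
   [set D | min_tds (path_adj (4*k+3)) D && P D] =
   [set Dt (4*k+3) (val t) | t in [set t : 'I_(k+2) | P (Dt (4*k+3) t)]].
  move=> P; apply/setP => D; rewrite inE; apply/andP/imsetP.
    case=> /min_is_Dt [t ht ->] HP.
    have ht' : t < k+2 by lia.
    by exists (Ordinal ht'); rewrite // inE.
  case=> t; rewrite inE => HP ->; split => //; apply: min_Dt; change (nat_of_ord t <= k+1); have := ltn_ord t; lia.
have Hcard : forall P : pred {set 'I_(4*k+3)},
   #|[set D | min_tds (path_adj (4*k+3)) D && P D]| = #|[set t : 'I_(k+2) | P (Dt (4*k+3) t)]|.
  move=> P; rewrite Hset card_imset //; move=> a b; exact: Dt_inj.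
split.
  have := Hcard predT. rewrite /tau.
  have -> : [set D | min_tds (path_adj (4 * k + 3)) D] = [set D | min_tds (path_adj (4*k+3)) D && predT D].
    by apply/setP => D; rewrite !inE andbT.
  move=> ->. have -> : [set t : 'I_(k+2) | predT (Dt (4*k+3) t)] = [set: 'I_(k+2)] by apply/setP=> t; rewrite !inE.
  by rewrite cardsT card_ord.
move=> v /=. rewrite /TDV Hcard.
have Hv : forall t, (v \in Dt (4*k+3) t) = ff t v by move=> t; rewrite inE.
under eq_finset => t do rewrite Hv.
have hv := ltn_ord v.
have Hi : (v:nat) = 4 * (v %/ 4) + v %% 4 by lia.
have Hr : v %% 4 < 4 by rewrite ltn_pmod.
have Hj : v %/ 4 <= k by lia.
have Hj3 : v %% 4 = 3 -> v %/ 4 < k by lia.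
rewrite Hi.
have e1 : (4 * (v %/ 4) + v %% 4).+1 = 4 * (v %/ 4) + (v %% 4).+1 by lia.
rewrite e1.
move: (v %/ 4) (v %% 4) Hr Hj Hj3 => j r Hr Hj Hj3.
case: r Hr Hj3 => [|[|[|[|r]]]] // _ Hj3.
- have -> : (4 * j + 1) %% 4 = 1 by lia.
  have -> : (4 * j + 1) %/ 4 = j by lia.
  rewrite addn0. under eq_finset => t do rewrite ff0.
  rewrite (card_pred (k+2) (fun t => t <= j)) cnt_le //; lia.
- have -> : (4 * j + 2) %% 4 = 2 by lia.
  under eq_finset => t do rewrite ff1.
  rewrite (card_pred (k+2) (fun t => true)) sum_nat_const_nat; lia.
- have -> : (4 * j + 3) %% 4 = 3 by lia.
  have -> : (4 * j + 3) %/ 4 = j by lia.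
  under eq_finset => t do rewrite ff2.
  rewrite (card_pred (k+2) (fun t => j < t)) cnt_gt //; lia.
- have -> : (4 * j + 4) %% 4 = 0 by lia.
  under eq_finset => t do rewrite ff3.
  rewrite (card_pred (k+2) (fun t => false)) sum_nat_const_nat; lia.
Qed.
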